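(* Let $(X,d)$ be a nonempty, separable, ultrametric metric space which is spherically dense. Then: (a) for every $c_0\in X$, all real numbers $0\le r_1<r_0$, and every $z\in X$, there exists $c_1\in X$ such that $B(c_1,r_1)\subseteq B(c_0,r_0)$ and $z\notin B(c_1,r_1)$; (b) $X$ is not spherically complete.
   Context: $B(c,r)=\{x: d(x,c)\le r\}$ is the closed ball, $r\ge0$. A metric space is spherically dense if $\operatorname{diam}(B(c,r))=r$ for every $c\in X$ and every $r\ge 0$, where $\operatorname{diam}(A)=\sup_{x,y\in A}d(x,y)$. Ultrametric: $d(x,z)\le\max(d(x,y),d(y,z))$. Separable: has a countable dense subset. Spherically complete: for all sequences $(c_i)$ in $X$, $(r_i)$ in $\mathbb R_{\ge0}$ with $B(c_0,r_0)\supseteq B(c_1,r_1)\supseteq\cdots$, $\bigcap_i B(c_i,r_i)\ne\emptyset$. *)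

(* Defs.v *)
From Stdlib Require Import Reals.
Open Scope R_scope.

Definition is_metric {X : Type} (d : X -> X -> R) : Prop :=
  (forall x y, 0 <= d x y) /\
  (forall x y, d x y = 0 <-> x = y) /\
  (forall x y, d x y = d y x) /\
  (forall x y z, d x z <= d x y + d y z).

Definition ultrametric {X : Type} (d : X -> X -> R) : Prop :=
  forall x y z, d x z <= Rmax (d x y) (d y z).

Definition ball {X : Type} (d : X -> X -> R) (c : X) (r : R) : X -> Prop :=
  fun x => d x c <= r.

Definition diam_is {X : Type} (d : X -> X -> R) (A : X -> Prop) (t : R) : Prop :=
  is_lub (fun s => exists x y, A x /\ A y /\ s = d x y) t.

Definition spherically_dense {X : Type} (d : X -> X -> R) : Prop :=
  forall (c : X) (r : R), 0 <= r -> diam_is d (ball d c r) r.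

Definition separable {X : Type} (d : X -> X -> R) : Prop :=
  exists D : X -> Prop,
    (exists f : nat -> X, forall x, D x -> exists n, f n = x) /\
    (forall x eps, 0 < eps -> exists y, D y /\ d x y < eps).

Definition spherically_complete {X : Type} (d : X -> X -> R) : Prop :=
  forall (c : nat -> X) (r : nat -> R),
    (forall i, 0 <= r i) ->
    (forall i x, ball d (c (S i)) (r (S i)) x -> ball d (c i) (r i) x) ->
    exists x, forall i, ball d (c i) (r i) x.

(* Main.v *)
Require Import Defs.
From Stdlib Require Import Reals.
From Stdlib Require Import Lra Lia Classical ClassicalEpsilon.
Open Scope R_scope.

Lemma um_le (X : Type) (d : X -> X -> R) : ultrametric d ->
  forall x y z a, d x y <= a -> d y z <= a -> d x z <= a.
Proof. intros U x y z a H1 H2. eapply Rle_trans; [apply (U x y z)|]. unfold Rmax; destruct Rle_dec; auto. Qed.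

Lemma part_a (X : Type) (d : X -> X -> R) :
  is_metric d -> ultrametric d -> spherically_dense d ->
  forall (c0 : X) (r0 r1 : R) (z : X), 0 <= r1 -> r1 < r0 ->
     exists c1 : X,
       (forall x, ball d c1 r1 x -> ball d c0 r0 x) /\ ~ ball d c1 r1 z.
Proof.
  intros [Hpos [Hid [Hsym Htri]]] U SD c0 r0 r1 z H0 H01.
  destruct (SD c0 r0 ltac:(lra)) as [Hub Hlub].
  assert (exists x y, ball d c0 r0 x /\ ball d c0 r0 y /\ r1 < d x y) as (x & y & Hx & Hy & Hxy).
  { apply NNPP; intro N. assert (r0 <= r1); [|lra].
    apply Hlub. intros s (x & y & Hx & Hy & ->).
    destruct (Rle_dec (d x y) r1) as [|n]; auto.
    exfalso; apply N; exists x, y; repeat split; auto; lra. }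
  assert (Hsub : forall c1, ball d c0 r0 c1 ->
            forall x, ball d c1 r1 x -> ball d c0 r0 x).
  { intros c1 Hc1 w Hw. unfold ball in *. apply (um_le X d U w c1 c0); lra. }
  destruct (Rle_dec (d z x) r1) as [Hzx|Hzx].
  - exists y. split; [apply Hsub; auto|]. unfold ball. intro Hzy.
    assert (d x y <= r1); [|lra]. apply (um_le X d U x z y); auto.
    rewrite Hsym; auto.
  - exists x. split; [apply Hsub; auto|]. unfold ball. lra.
Qed.

Theorem theorem3p2 (X : Type) (d : X -> X -> R) :
  is_metric d -> inhabited X -> separable d -> ultrametric d ->
  spherically_dense d ->
  (forall (c0 : X) (r0 r1 : R) (z : X), 0 <= r1 -> r1 < r0 ->
     exists c1 : X,
       (forall x, ball d c1 r1 x -> ball d c0 r0 x) /\ ~ ball d c1 r1 z) /\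
  ~ spherically_complete d.
Proof.
  intros M [x0] [D [[f Hf] Hdense]] U SD.
  pose proof (part_a X d M U SD) as PA.
  split; [exact PA|].
  destruct M as [Hpos [Hid [Hsym Htri]]].
  set (r := fun n : nat => 1 + / INR (S n)).
  assert (Hr1 : forall n, 1 < r n).
  { intro n. unfold r. assert (0 < / INR (S n)); [|lra].
    apply Rinv_0_lt_compat, lt_0_INR; lia. }
  assert (Hrdec : forall n, r (S n) < r n).
  { intro n. unfold r. apply Rplus_lt_compat_l, Rinv_lt_contravar.
    - apply Rmult_lt_0_compat; apply lt_0_INR; lia.
    - apply lt_INR; lia. }
  assert (G : forall (c : X) (n : nat), exists c1 : X,
     (forall x, ball d c1 (r (S n)) x -> ball d c (r n) x) /\ ~ ball d c1 (r (S n)) (f n)).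
  { intros c n. apply PA; [pose proof (Hr1 (S n)); lra | apply Hrdec]. }
  set (g := fun c n => proj1_sig (constructive_indefinite_description _ (G c n))).
  assert (Hg : forall c n,
     (forall x, ball d (g c n) (r (S n)) x -> ball d c (r n) x) /\ ~ ball d (g c n) (r (S n)) (f n)).
  { intros c n. unfold g. destruct (constructive_indefinite_description _ (G c n)); auto. }
  set (c := fix c (n : nat) : X := match n with O => x0 | S m => g (c m) m end).
  intro SC. destruct (SC c r) as [x Hx].
  - intro i; pose proof (Hr1 i); lra.
  - intros i w Hw. exact (proj1 (Hg (c i) i) w Hw).
  - destruct (Hdense x 1 ltac:(lra)) as [y [Dy Hxy]].
    destruct (Hf y Dy) as [m Hm].
    apply (proj2 (Hg (c m) m)). rewrite Hm.
    change (ball d (c (S m)) (r (S m)) y).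
    unfold ball. apply (um_le X d U y x (c (S m))).
    + rewrite Hsym. pose proof (Hr1 (S m)). lra.
    + apply Hx.
Qed.
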